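(* Let $H$ be a vertically connected matroid and $Y\subseteq E(H)$. Suppose that $\{A,B\}$ is a vertical $2$-separation of $H$ with $A$ minimal (under inclusion) among sides of vertical $2$-separations of $H$ that contain $Y$. Then $(A-Y)\cap \mathrm{cl}_H(B)=\emptyset$. Moreover, if $x\in (A-Y)\cap \mathrm{cl}^*_H(B)$, then $r_H(A)=2$ and $x$ is a coloop of $H|A$.
   Context: For a matroid $H$ and $A\subseteq E(H)$, $\lambda_H(A)=r_H(A)+r_H(E(H)-A)-r(H)$. A partition $\{A,B\}$ of $E(H)$ is a vertical $k$-separation if $\lambda_H(A)\le k-1$ and $r_H(A),r_H(B)\ge k$. $H$ is vertically connected if it has no vertical $1$-separation, and vertically $3$-connected if it has no vertical $1$- or $2$-separation. $\mathrm{cl}^*_H$ is the closure operator of the dual $H^*$. *)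

(* Defs.v *)
From mathcomp Require Import all_boot.
Set Implicit Arguments. Unset Strict Implicit. Unset Printing Implicit Defensive.

(* A matroid H whose ground set E(H) is the whole finite type T,
   given by its rank function satisfying the rank axioms (R1)-(R3). *)
Record matroid (T : finType) := Matroid {
  rk : {set T} -> nat;
  rk_le_card : forall X : {set T}, rk X <= #|X|;
  rk_mono : forall X Y : {set T}, X \subset Y -> rk X <= rk Y;
  rk_submod : forall X Y : {set T}, rk (X :|: Y) + rk (X :&: Y) <= rk X + rk Y
}.

Section Matroids.
Variable T : finType.
Implicit Types (M : matroid T) (X A B Y : {set T}) (x : T).

Definition rank_of M := rk M [set: T].

Definition cl_of (r : {set T} -> nat) X : {set T} := [set x | r (x |: X) == r X].

Definition cl M X := cl_of (rk M) X.

Definition dual_rk M X := #|X| + rk M (~: X) - rank_of M.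

Definition cl_dual M X := cl_of (dual_rk M) X.

(* connectivity function lambda_H(A) = r(A) + r(E - A) - r(H)
   (never truncated, by submodularity) *)
Definition lambda M A := rk M A + rk M (~: A) - rank_of M.

Definition vert_sep M (k : nat) A B :=
  [/\ B = ~: A, lambda M A <= k.-1, k <= rk M A & k <= rk M B].

Definition vert_connected M := forall A B, ~ vert_sep M 1 A B.

Definition coloop_restr M A x := x \in A /\ rk M (A :\ x) < rk M A.

End Matroids.

(* Main.v *)
Require Import Defs.
From mathcomp Require Import all_boot.
From mathcomp Require Import zify.

Section Aux.
Variable T : finType.
Implicit Types (M : matroid T) (X A B : {set T}) (x : T).

Lemma rk0 M : rk M set0 = 0.
Proof. have := rk_le_card M set0; rewrite cards0; lia. Qed.

Lemma rkU1 M x X : rk M (x |: X) <= rk M X + 1.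
Proof.
have := rk_submod M [set x] X; have := rk_le_card M [set x]; rewrite cards1; lia.
Qed.

Lemma rkE M X : rank_of M <= rk M X + rk M (~: X).
Proof. have := rk_submod M X (~: X); rewrite setUCr setICr rk0 /rank_of; lia. Qed.

Lemma rkD1 M x A : x \in A -> rk M A <= rk M (A :\ x) + 1.
Proof. by move=> xA; have := rkU1 M x (A :\ x); rewrite setD1K. Qed.

Lemma compD1 x A : x \in A -> ~: (A :\ x) = x |: ~: A.
Proof.
move=> xA; apply/setP=> y; rewrite !inE; case: (eqVneq y x) => [->|] //=.

Qed.
End Aux.
Arguments rk0 {T}. Arguments rkU1 {T}. Arguments rkE {T}. Arguments rkD1 {T}. Arguments compD1 {T}.

Theorem lemma3p2 (T : finType) (H : matroid T) (Y A B : {set T}) :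
  vert_connected H ->
  vert_sep H 2 A B ->
  Y \subset A ->
  (forall A' B' : {set T}, vert_sep H 2 A' B' -> Y \subset A' ->
     A' \subset A -> A' = A) ->
  ((A :\: Y) :&: cl H B = set0) /\
  (forall x, x \in (A :\: Y) :&: cl_dual H B ->
     rk H A = 2 /\ coloop_restr H A x).
Proof.
move=> Hvc [HB Hl HA HBr] HY Hmin.
have key : forall x, x \in A :\: Y -> rk H (x |: B) <= rk H B + (rk H A - rk H (A :\ x)) ->
   rk H (A :\ x) < 2.
  move=> x; rewrite inE => /andP [xY xA] Hb.
  case: (ltnP (rk H (A :\ x)) 2) => // H2.
  have Hne : A :\ x <> A by move=> E; move: xA; rewrite -E !inE eqxx.
  exfalso; apply: Hne; apply: (Hmin _ (x |: B)).
  - split.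
    + by rewrite HB compD1.
    + rewrite /lambda compD1 // -HB /=.
      have := rk_mono H (subsetUr [set x] B); have := rk_mono H (subD1set A x).
      move: Hl; rewrite /lambda -HB /=; lia.
    + done.
    + by apply: leq_trans HBr (rk_mono _ (subsetUr _ _)).
  - apply/subsetP=> y yY; rewrite !inE (subsetP HY _ yY) andbT.
    by apply/eqP=> E; move: xY; rewrite -E yY.
  - exact: subD1set.
split.
  apply/setP=> x; rewrite in_set0 in_setI; apply/negP=> /andP [xAY].
  rewrite /cl /cl_of inE => /eqP Hcl.
  have xA : x \in A by move: xAY; rewrite inE => /andP [].
  have := key x xAY; rewrite Hcl => /(_ (leq_addr _ _)) H1.
  have HD := rkD1 H _ _ xA; have HDm := rk_mono H (subD1set A x).
  apply: (Hvc (A :\ x) (x |: B)); split.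
  - by rewrite HB compD1.
  - rewrite /lambda compD1 // -HB Hcl /=.
    have := rkE H (A :\ x); rewrite compD1 // -HB Hcl.
    move: Hl; rewrite /lambda -HB /=; lia.
  - lia.
  - have := rk_mono H (subsetUr [set x] B); lia.
move=> x; rewrite in_setI => /andP [xAY]; rewrite /cl_dual /cl_of inE => /eqP Hd.
have xA : x \in A by move: xAY; rewrite inE => /andP [].
have xB : x \notin B by rewrite HB inE xA.
move: Hd; rewrite /dual_rk cardsU1 xB HB -compD1 // !setCK.
have := rkE H A; have := rkE H (A :\ x); rewrite compD1 // -HB.
have := rkU1 H x B; have := rkD1 H _ _ xA; have := rk_mono H (subD1set A x).
move=> h1 h2 h3 h4 h5 Hd.
have Hc : rk H (A :\ x) + 1 = rk H A.
  have := rk_le_card H (~: A); have := rk_le_card H (x |: ~: A); rewrite cardsU1 -?HB xB.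
  move: h4 h5 Hd; lia.
have := key x xAY; rewrite -Hc => /(_ ltac:(lia)) h6.
split; first lia.
split=> //; lia.
Qed.
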